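(* The ideal $I^{(k,r)}$ coincides with each of $J_1=\{f\in V: u_\lambda(f)=0$ for all $\lambda\in P$ with $\sharp^{(k,r)}(\lambda)\ge1\}$, $J_2=\{f\in V: u_\lambda(f)=0$ for all $\lambda\in S^{(k,r)}\}$, $J_3=\{f\in V: u_\lambda(f)=0$ for all $\lambda\in S'^{(k,r)}\}$, where $u_\lambda$ is evaluated at the specialization $(\ast)$.
   Context: Fix integers $n\ge2$, $1\le k\le n-1$, $r\ge2$, $g=\gcd(k+1,r-1)$, $\tau=e^{2\pi\sqrt{-1}/(r-1)}$, and specialize $(\ast)$: $t=u^{(r-1)/g}$, $q=\tau u^{-(k+1)/g}$; $\mathbb K$ is the resulting field of rational functions in (a root of) $u$ and $V=\mathbb K[x_1^{\pm1},\dots,x_n^{\pm1}]$. $Z^{(k,r)}$ is the set of $z\in\mathbb K^n$ for which there exist distinct $i_1,\dots,i_{k+1}\in\{1,\dots,n\}$ and $s_1,\dots,s_k\in\mathbb Z_{\ge0}$ with $z_{i_{a+1}}=z_{i_a}tq^{s_a}$ ($1\le a\le k$), $\sum_as_a\le r-2$, and $i_a<i_{a+1}$ whenever $s_a=0$; $I^{(k,r)}=\{f\in V:f(z)=0\ \forall z\in Z^{(k,r)}\}$. Let $P=\mathbb Z^n$. For $\lambda\in P$, $\rho(\lambda)$ is the unique permutation of $(\frac{n-1}2,\frac{n-3}2,\dots,-\frac{n-1}2)$ with $\rho(\lambda)_i>\rho(\lambda)_j$ iff $\lambda_i>\lambda_j$ or ($\lambda_i=\lambda_j$, $i<j$). For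 $f\in V$, $u_\lambda(f)=f(t^{-\rho(\lambda)_1}q^{-\lambda_1},\dots,t^{-\rho(\lambda)_n}q^{-\lambda_n})$. A wheel in $\lambda$ is a tuple $(i_1,\dots,i_{k+1})$ of distinct indices such that $(u_\lambda(x_1),\dots,u_\lambda(x_n))$ satisfies the defining conditions of $Z^{(k,r)}$ with these indices, i.e. $u_\lambda(x_{i_{a+1}})=u_\lambda(x_{i_a})tq^{s_a}$ for some $s_a\in\mathbb Z_{\ge0}$ with $\sum s_a\le r-2$ and $i_a<i_{a+1}$ if $s_a=0$. Two wheels that are cyclic rotations of each other are identified; $\sharp^{(k,r)}(\lambda)$ is the number of equivalence classes of wheels in $\lambda$. For $\lambda\in P$ let $(i_1,\dots,i_n)$ be the indices with $\rho(\lambda)_{i_a}=\frac{n+1}2-a$. For $a\ge2,b\ge1$, $(i,j)$ is a neighborhood of type $(a,b)$ in $\lambda$ if $\rho(\lambda)_i-\rho(\lambda)_j=a-1$ and either $\lambda_i-\lambda_j\le b-1$, or $\lambda_i-\lambda_j=b$ and $j<i$. $S^{(k,r)}$: the $\lambda$ having a neighborhood of type $(k+1,r-1)$; $S'^{(k,r)}$: the $\lambda$ having a neighborhood $(i,j)$ of type $(k+1,r-1)$ with $\lambda_i-\lambda_j\le r-2$. *)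

(* Defs.v *)
From mathcomp Require Import all_boot all_order all_algebra.
From mathcomp Require Import fraction.
Set Implicit Arguments.
Unset Strict Implicit.
Unset Printing Implicit Defensive.
Import Order.TTheory GRing.Theory Num.Theory.
Local Open Scope ring_scope.

Section WheelDefs.

Variable F : numClosedFieldType.

(* K = F(w), rational functions in w, where w is a square root of u,
   i.e. u = w^2.  (The "root of u" needed to make sense of t^{-rho_i}
   for half-integral rho_i.) *)
Definition KK := {fraction {poly F}}.
Definition w_var : KK := tofrac 'X.
Definition u_var : KK := w_var ^+ 2.

Variables (n k r : nat).

Definition gg : nat := gcdn k.+1 r.-1.

(* tau = exp(2 pi i/(r-1)) : the square of the (r-1)-th root of -1 with
   minimal nonnegative argument, i.e. (exp(pi i/(r-1)))^2. *)
Definition tau : F := (r.-1).-root (-1) ^+ 2.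

Definition t_sp : KK := u_var ^+ (r.-1 %/ gg).
Definition q_sp : KK := tofrac (tau%:P) * u_var ^- (k.+1 %/ gg).
Definition sqrt_t : KK := w_var ^+ (r.-1 %/ gg).

(* Laurent polynomials in x_1..x_n over K, as finite formal sums
   of terms c * x^e with e in Z^n. *)
Definition laurent := seq (KK * {ffun 'I_n -> int}).
Definition leval (f : laurent) (z : 'I_n -> KK) : KK :=
  \sum_(m <- f) m.1 * \prod_(i < n) z i ^ (m.2 i).

(* wheel condition for a point z with indices w = (i_1,...,i_{k+1});
   the s_a are bounded by r-2 (automatic since sum s_a <= r-2). *)
Definition is_wheel_at (z : 'I_n -> KK) (w : (k.+1).-tuple 'I_n) : bool :=
  uniq w &&
  [exists s : {ffun 'I_k -> 'I_(r.-1)},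
     (\sum_(a < k) nat_of_ord (s a) <= r - 2)%N &&
     [forall a : 'I_k,
        (z (tnth w (lift ord0 a)) == z (tnth w (widen_ord (leqnSn k) a)) * t_sp * q_sp ^+ s a)
        && ((s a == 0 :> nat) ==>
            (tnth w (widen_ord (leqnSn k) a) < tnth w (lift ord0 a))%N)]].

(* Z^{(k,r)} (points of the torus (K^x)^n, where Laurent polynomials
   can be evaluated) *)
Definition inZ (z : 'I_n -> KK) : Prop :=
  (forall i, z i != 0) /\ exists w, is_wheel_at z w.

Definition ideal_I (f : laurent) : Prop :=
  forall z, inZ z -> leval f z = 0.

Definition wt := 'I_n -> int.

Definition rank0 (lam : wt) (i : 'I_n) : nat :=
  #|[set j : 'I_n | (lam i < lam j) || ((lam j == lam i) && (j < i)%N)]|.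
(* rho2 lam i = 2 * rho(lam)_i = (n-1) - 2 * rank0 *)
Definition rho2 (lam : wt) (i : 'I_n) : int :=
  (n%:Z - 1) - 2 * (rank0 lam i)%:Z.

(* the point (u_lam(x_1),...,u_lam(x_n)):
   u_lam(x_i) = t^{-rho(lam)_i} q^{-lam_i} *)
Definition upt (lam : wt) (i : 'I_n) : KK :=
  sqrt_t ^ (- rho2 lam i) * q_sp ^ (- lam i).

Definition u_lam (lam : wt) (f : laurent) : KK := leval f (upt lam).

Definition wheels (lam : wt) : {set (k.+1).-tuple 'I_n} :=
  [set w | is_wheel_at (upt lam) w].
Definition wheel_classes (lam : wt) : {set {set (k.+1).-tuple 'I_n}} :=
  [set [set rot_tuple j w | j : 'I_k.+1] | w in wheels lam].
Definition sharp (lam : wt) : nat := #|wheel_classes lam|.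

Definition nbhd (a b : nat) (lam : wt) (i j : 'I_n) : bool :=
  (rho2 lam i - rho2 lam j == 2 * (a%:Z - 1)) &&
  ((lam i - lam j <= b%:Z - 1) || ((lam i - lam j == b%:Z) && (j < i)%N)).

Definition inS (lam : wt) : Prop :=
  exists i j, nbhd k.+1 r.-1 lam i j.
Definition inS' (lam : wt) : Prop :=
  exists i j, nbhd k.+1 r.-1 lam i j /\ lam i - lam j <= r%:Z - 2.

Definition ideal_J1 (f : laurent) : Prop :=
  forall lam, (1 <= sharp lam)%N -> u_lam lam f = 0.
Definition ideal_J2 (f : laurent) : Prop :=
  forall lam, inS lam -> u_lam lam f = 0.
Definition ideal_J3 (f : laurent) : Prop :=
  forall lam, inS' lam -> u_lam lam f = 0.

End WheelDefs.

(* Main.v *)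
Require Import Defs.
From mathcomp Require Import all_boot all_order all_algebra fraction.
From mathcomp Require Import zify ring lra.
Set Implicit Arguments.
Unset Strict Implicit.
Unset Printing Implicit Defensive.
Import Order.TTheory GRing.Theory Num.Theory.
Local Open Scope ring_scope.

Section Rank.
Variable n : nat.
Implicit Types (lam : wt n) (a b c i j : 'I_n).

Definition bef lam a b := (lam b < lam a) || ((lam a == lam b) && (a < b)%N).

Lemma rank0E lam i : rank0 lam i = #|[set j | bef lam j i]|.
Proof. by []. Qed.

Lemma bef_irr lam a : ~~ bef lam a a.
Proof. by rewrite /bef ltxx ltnn andbF. Qed.

Lemma bef_trans lam a b c : bef lam a b -> bef lam b c -> bef lam a c.
Proof.
rewrite /bef => /orP[h1|/andP[/eqP e1 h1]] /orP[h2|/andP[/eqP e2 h2]]; apply/orP.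
- by left; lia.
- by left; lia.
- by left; lia.
- by right; apply/andP; split; [apply/eqP; lia | lia].
Qed.

Lemma bef_total lam a b : a != b -> bef lam a b || bef lam b a.
Proof.
move=> nab; rewrite /bef.
have: (nat_of_ord a != b) by apply: contra nab => /eqP e; apply/eqP/val_inj.
move=> nab'.
case: (ltrgtP (lam a) (lam b)) => h //=.
lia.
Qed.

Lemma bef_asym lam a b : bef lam a b -> ~~ bef lam b a.
Proof. by move=> h; apply/negP => h'; move: (bef_trans h h'); rewrite (negbTE (bef_irr _ _)). Qed.

Lemma rank_lt lam a b : bef lam a b -> (rank0 lam a < rank0 lam b)%N.
Proof.
move=> h; rewrite !rank0E; apply: proper_card; apply/properP; split.
  by apply/subsetP => x; rewrite !inE => hx; apply: bef_trans hx h.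
by exists a; rewrite !inE ?h ?bef_irr.
Qed.

Lemma rank_ltE lam a b : (rank0 lam a < rank0 lam b)%N = bef lam a b.
Proof.
apply/idP/idP; last exact: rank_lt.
move=> h; case: (eqVneq a b) => [e|nab]; first by subst; rewrite ltnn in h.
case/orP: (bef_total lam nab) => // h'; move: (rank_lt h'); lia.
Qed.

Lemma rank_inj lam : injective (rank0 lam).
Proof.
move=> a b e; apply/eqP; apply/negPn/negP => nab.
by case/orP: (bef_total lam nab); rewrite -rank_ltE e ltnn.
Qed.

Lemma rank_ltn lam i : (rank0 lam i < n)%N.
Proof.
rewrite rank0E; have : [set j | bef lam j i] \proper [set: 'I_n].
  by apply/properP; split; [apply/subsetP|exists i; rewrite ?inE ?bef_irr].
by move/proper_card; rewrite cardsT card_ord.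
Qed.

Lemma rank_surj lam m : (m < n)%N -> exists i, rank0 lam i = m.
Proof.
move=> hm.
pose g := fun i => Ordinal (rank_ltn lam i).
have ig : injective g by move=> a b /(congr1 val) /= /rank_inj.
have /codomP [i hi] := injF_onto ig (Ordinal hm).
by exists i; move/(congr1 val): hi => /= ->.
Qed.

Lemma bef_lam lam a b : bef lam a b -> lam b <= lam a.
Proof. by rewrite /bef => /orP[/ltW //|/andP[/eqP -> _]]. Qed.

Lemma rank_succ lam a b : bef lam a b ->
  (forall c, bef lam a c -> bef lam c b -> False) ->
  rank0 lam b = (rank0 lam a).+1.
Proof.
move=> hab hno; have := rank_lt hab => lt.
apply/eqP; rewrite eqn_leq lt andbT leqNgt; apply/negP => h.
have [c hc] : exists c, rank0 lam c = (rank0 lam a).+1.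
  by apply: rank_surj; have := rank_ltn lam b; lia.
have h1 : (rank0 lam a < rank0 lam c)%N by rewrite hc.
have h2 : (rank0 lam c < rank0 lam b)%N by rewrite hc.
by apply: (hno c); rewrite -rank_ltE.
Qed.

Lemma rank_eq lam1 lam2 i :
  (forall x, bef lam1 x i = bef lam2 x i) -> rank0 lam1 i = rank0 lam2 i.
Proof. by move=> h; rewrite !rank0E; apply: eq_card => x; rewrite !inE h. Qed.

End Rank.

Section Alg.
Variable F : numClosedFieldType.
Variables k r : nat.
Variable hr : (2 <= r)%N.

Local Notation st := (sqrt_t F k r).
Local Notation q := (q_sp F k r).
Local Notation t := (t_sp F k r).
Local Notation w := (w_var F).

Lemma w_nz : w != 0.
Proof. by rewrite /w_var tofrac_eq0 polyX_eq0. Qed.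

Lemma gg_pos : (0 < gg k r)%N.
Proof. by rewrite /gg gcdn_gt0. Qed.

Lemma st_nz : st != 0.
Proof. by rewrite /sqrt_t expf_neq0 // w_nz. Qed.

Lemma q_nz : q != 0.
Proof.
rewrite /q_sp mulf_neq0 //.
  rewrite tofrac_eq0 polyC_eq0 /tau expf_neq0 // rootC_eq0 ?oppr_eq0 ?oner_eq0 //; lia.
by rewrite invr_eq0 expf_neq0 // /u_var expf_neq0 // w_nz.
Qed.

Lemma t_st : t = st ^+ 2.
Proof. by rewrite /t_sp /sqrt_t /u_var -!exprM mulnC. Qed.

Lemma tau_pow : tau F r ^+ r.-1 = 1.
Proof.
rewrite /tau -exprM mulnC exprM rootCK; last by lia.
by rewrite sqrrN expr1n.
Qed.

Lemma key_rel : st ^+ (2 * k.+1) * q ^+ r.-1 = 1.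
Proof.
rewrite /q_sp exprMn -tofracXn -rmorphXn tau_pow tofrac1 mul1r.
rewrite /sqrt_t /u_var -exprVn -!exprM.
set a := (r.-1 %/ gg k r)%N; set b := (k.+1 %/ gg k r)%N.
have e : (a * (2 * k.+1) = 2 * (b * r.-1))%N.
  have h1 : (a * gg k r = r.-1)%N by rewrite divnK // /gg dvdn_gcdr.
  have h2 : (b * gg k r = k.+1)%N by rewrite divnK // /gg dvdn_gcdl.
  rewrite -h2 -h1; ring.
by rewrite e exprVn -exprM mulfV // expf_neq0 // w_nz.
Qed.

Lemma st_pow_inj (M : nat) : (0 < M)%N -> injective (fun N : nat => st ^+ (M * N)).
Proof.
move=> hM N1 N2 /= /eqP.
rewrite /sqrt_t /w_var -!exprM -!tofracXn tofrac_eq => /eqP hX.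
have := congr1 (fun p : {poly F} => size p) hX.
rewrite /= !size_polyXn => -[] /eqP.
have ha : (0 < r.-1 %/ gg k r)%N.
  rewrite divn_gt0 ?gg_pos //; apply: dvdn_leq; [lia | by rewrite /gg dvdn_gcdr].
move=> /eqP e; apply/eqP; rewrite -(eqn_pmul2l hM) -(eqn_pmul2l ha); apply/eqP; lia.
Qed.

End Alg.
Section Uni.
Variable F : numClosedFieldType.
Variable n : nat.
Local Notation K := (KK F).

Lemma prod_exprz (v : K) (g : 'I_n -> int) : v != 0 ->
  \prod_i v ^ (g i) = v ^ (\sum_i g i).
Proof.
move=> hv; have hu : v \is a GRing.unit by rewrite unitfE.
by symmetry; apply: (big_morph (fun z : int => v ^ z) (exprzDr hu) (expr0z v)).
Qed.

Lemma leval_form (f : laurent F n) (a : 'I_n -> K) (b : 'I_n -> bool) (v : K) :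
  v != 0 ->
  leval f (fun i => a i * (if b i then v else 1)) =
  \sum_(m <- f) (m.1 * \prod_i a i ^ (m.2 i)) * v ^ (\sum_i (if b i then m.2 i else 0)).
Proof.
move=> hv; rewrite /leval; apply: eq_bigr => m _.
rewrite -mulrA; congr (_ * _).
rewrite (eq_bigr (fun i => a i ^ m.2 i * (if b i then v else 1) ^ m.2 i)); last by move=> i _; apply: expfzMl.
rewrite big_split /= -prod_exprz //; congr (_ * _).
by apply: eq_bigr => i _; case: (b i) => /=; [|rewrite exp1rz expr0z].
Qed.

Lemma uni (f : laurent F n) (a : 'I_n -> K) (b : 'I_n -> bool) (vs : nat -> K) :
  injective vs -> (forall N, vs N != 0) ->
  (forall N, leval f (fun i => a i * (if b i then vs N else 1)) = 0) ->
  forall v, v != 0 -> leval f (fun i => a i * (if b i then v else 1)) = 0.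
Proof.
move=> ivs nvs h0 v hv.
set d := fun m : K * {ffun 'I_n -> int} => m.1 * \prod_i a i ^ (m.2 i).
set N := fun m : K * {ffun 'I_n -> int} => \sum_i (if b i then m.2 i else 0).
set S := (\max_(m <- f) `|N m|)%N.
have hS : forall m, m \in f -> 0 <= N m + S%:Z.
  move=> m hm; have hle : (`|N m| <= S)%N.
    by rewrite /S; apply: (@leq_bigmax_seq _ _ _ (fun m => `|N m|%N) m hm).
  have : `|N m| <= S%:Z by rewrite lez_nat.
  lia.
pose p := \sum_(m <- f) d m *: 'X^(absz (N m + S%:Z)).
have hp : forall x, x != 0 -> p.[x] = leval f (fun i => a i * (if b i then x else 1)) * x ^+ S.
  move=> x hx; rewrite leval_form // horner_sum big_distrl /=.
  rewrite big_seq_cond [RHS]big_seq_cond; apply: eq_bigr => m /andP[hm _].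
  rewrite hornerZ hornerXn -mulrA; congr (_ * _).
  have hu : x \is a GRing.unit by rewrite unitfE.
  rewrite !exprnP -exprzDr // gez0_abs //; exact: hS.
have p0 : p = 0.
  apply/eqP/negPn/negP => pn0.
  have hr1 : all (root p) (map vs (iota 0 (size p))).
    apply/allP => x /mapP [N0 _ ->]; apply/eqP; rewrite (hp _ (nvs N0)) h0; exact: mul0r.
  have hr2 : uniq (map vs (iota 0 (size p))) by rewrite map_inj_uniq // iota_uniq.
  by have := max_poly_roots pn0 hr1 hr2; rewrite size_map size_iota ltnn.
have := hp v hv; rewrite p0 horner0 => /esym /eqP.
by rewrite mulf_eq0 expf_eq0 (negbTE hv) andbF orbF => /eqP.
Qed.

End Uni.

Section Upt.
Variable F : numClosedFieldType.
Variables n k r : nat.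
Variable hr : (2 <= r)%N.
Local Notation st := (sqrt_t F k r).
Local Notation q := (q_sp F k r).
Local Notation t := (t_sp F k r).
Local Notation upt := (@Defs.upt F n k r).

Lemma unit_nz (x : KK F) : x != 0 -> x \is a GRing.unit.
Proof. by rewrite unitfE. Qed.

Lemma upt_nz lam i : upt lam i != 0.
Proof.
by rewrite /Defs.upt mulf_neq0 // expfz_neq0 // ?st_nz ?q_nz.
Qed.

Lemma upt_step lam a b (s : nat) : rank0 lam b = (rank0 lam a).+1 ->
  lam b = lam a - s%:Z -> upt lam b = upt lam a * t * q ^+ s.
Proof.
move=> hR hL; rewrite /Defs.upt /rho2 hR hL.
have e1 : - ((n%:Z - 1) - 2 * (rank0 lam a).+1%:Z) =
   - ((n%:Z - 1) - 2 * (rank0 lam a)%:Z) + (2%N)%:Z by lia.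
have e2 : - (lam a - s%:Z) = - lam a + s%:Z by lia.
rewrite e1 e2 (exprzDr (unit_nz (st_nz F k r))) (exprzDr (unit_nz (q_nz F k hr))).
rewrite t_st -!exprnP.
ring.
Qed.

Lemma q_inv : q ^- r.-1 = st ^+ (2 * k.+1).
Proof.
have := key_rel F k hr => /(congr1 (fun x => x / q ^+ r.-1)).
rewrite mulfK ?expf_neq0 ?q_nz // => ->.
by rewrite div1r.
Qed.

Lemma upt_wrap lam a b : rank0 lam b = (rank0 lam a + k)%N ->
  lam a = lam b + (r.-1)%:Z -> upt lam a = upt lam b * t.
Proof.
move=> hR hL; rewrite /Defs.upt /rho2 hR hL.
have e1 : - ((n%:Z - 1) - 2 * (rank0 lam a + k)%N%:Z) =
   - ((n%:Z - 1) - 2 * (rank0 lam a)%:Z) + ((2 * k)%N)%:Z by lia.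
have e2 : - (lam b + (r.-1)%:Z) = - lam b + (- (r.-1)%:Z) by lia.
rewrite e1 e2 (exprzDr (unit_nz (st_nz F k r))) (exprzDr (unit_nz (q_nz F k hr))).
rewrite -exprnN q_inv t_st -!exprnP.
have e3 : (2 * k.+1 = 2 * k + 2)%N by lia.
rewrite e3 exprD.
ring.
Qed.

Lemma mk_wheel (z : 'I_n -> KK F) (cc : 'I_k.+1 -> 'I_n) (ss : 'I_k -> nat) :
  injective cc -> (\sum_(a < k) ss a <= r - 2)%N ->
  (forall a : 'I_k, z (cc (lift ord0 a)) = z (cc (widen_ord (leqnSn k) a)) * t * q ^+ ss a) ->
  (forall a : 'I_k, ss a = 0%N -> (cc (widen_ord (leqnSn k) a) < cc (lift ord0 a))%N) ->
  is_wheel_at r z [tuple cc a | a < k.+1].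
Proof.
move=> icc hsum hrel hord.
have h0 : (0 < r.-1)%N by lia.
have hlt : forall a, (ss a < r.-1)%N.
  move=> a; have : (ss a <= \sum_(a < k) ss a)%N by rewrite (bigD1 a) //= leq_addr.
  lia.
rewrite /is_wheel_at; apply/andP; split.
  by apply/tuple_uniqP => a b; rewrite !tnth_mktuple; exact: icc.
apply/existsP; exists [ffun a => insubd (Ordinal h0) (ss a)].
have hv : forall a, nat_of_ord ([ffun a => insubd (Ordinal h0) (ss a)] a) = ss a.
  by move=> a; rewrite ffunE val_insubd hlt.
apply/andP; split.
  by rewrite (eq_bigr _ (fun a _ => hv a)).
apply/forallP => a; rewrite !tnth_mktuple hv; apply/andP; split.
  by apply/eqP; exact: hrel.
by apply/implyP => /eqP; exact: hord.
Qed.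

Lemma wheel_inv (z : 'I_n -> KK F) (w : (k.+1).-tuple 'I_n) : is_wheel_at r z w ->
  exists ss : 'I_k -> nat, [/\ uniq w, (\sum_(a < k) ss a <= r - 2)%N,
  (forall a : 'I_k, z (tnth w (lift ord0 a)) = z (tnth w (widen_ord (leqnSn k) a)) * t * q ^+ ss a) &
  (forall a : 'I_k, ss a = 0%N -> (tnth w (widen_ord (leqnSn k) a) < tnth w (lift ord0 a))%N)].
Proof.
case/andP => hu /existsP [s /andP [hs /forallP hall]].
exists (fun a => nat_of_ord (s a)); split => //.
  by move=> a; have /andP [/eqP -> _] := hall a.
by move=> a h; have /andP [_ /implyP] := hall a; apply; apply/eqP.
Qed.

Section Chain.
Variable hk1 : (1 <= k)%N.
Variable lam : wt n.
Variables i j : 'I_n.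
Variable hR : rank0 lam j = (rank0 lam i + k)%N.

Definition cidx m := odflt i [pick x | rank0 lam x == (rank0 lam i + m)%N].

Lemma cidx_rank m : (m <= k)%N -> rank0 lam (cidx m) = (rank0 lam i + m)%N.
Proof.
move=> hm; rewrite /cidx; case: pickP => [x /eqP // | h].
have [x hx] : exists x, rank0 lam x = (rank0 lam i + m)%N.
  by apply: rank_surj; have := rank_ltn lam j; lia.
by move: (h x); rewrite hx eqxx.
Qed.

Lemma cidx0 : cidx 0 = i.
Proof. by apply: (@rank_inj _ lam); rewrite cidx_rank // addn0. Qed.

Lemma cidxk : cidx k = j.
Proof. by apply: (@rank_inj _ lam); rewrite cidx_rank // hR. Qed.

Lemma cidx_inj m1 m2 : (m1 <= k)%N -> (m2 <= k)%N -> cidx m1 = cidx m2 -> m1 = m2.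
Proof. by move=> h1 h2 /(congr1 (rank0 lam)); rewrite !cidx_rank //; lia. Qed.

Lemma cidx_bef m : (m < k)%N -> bef lam (cidx m) (cidx m.+1).
Proof. by move=> hm; rewrite -rank_ltE !cidx_rank //; lia. Qed.

Definition sv m := absz (lam (cidx m) - lam (cidx m.+1)).

Lemma sv_eq m : (m < k)%N -> lam (cidx m.+1) = lam (cidx m) - (sv m)%:Z.
Proof.
move=> hm; have := bef_lam (cidx_bef hm); rewrite /sv => h.
rewrite gez0_abs; [lia | lia].
Qed.

Lemma sv0 m : (m < k)%N -> sv m = 0%N -> (cidx m < cidx m.+1)%N.
Proof.
move=> hm h0; have := cidx_bef hm; have := sv_eq hm; rewrite h0 subr0 /bef => ->.
by rewrite ltxx eqxx.
Qed.

Lemma sv_sum : ((\sum_(m < k) sv m)%N)%:Z = lam i - lam j.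
Proof.
rewrite (big_morph Posz PoszD (erefl (Posz 0))) -cidx0 -cidxk.
rewrite -(big_mkord xpredT (fun m => (sv m)%:Z)).
rewrite (telescope_sumr_eq (fun m => - lam (cidx m))) //.
  by rewrite opprK addrC.
by move=> m /andP [_ hm]; rewrite (sv_eq hm); lia.
Qed.

Lemma chain_wheel : lam i - lam j <= (r.-1)%:Z - 1 ->
  exists w : (k.+1).-tuple 'I_n, is_wheel_at r (upt lam) w.
Proof.
move=> hd; exists [tuple cidx a | a < k.+1].
apply: (mk_wheel (ss := fun a : 'I_k => sv a)).
- move=> a b /cidx_inj h; apply/val_inj; apply: h; rewrite -ltnS; exact: ltn_ord.
- have := sv_sum; lia.
- move=> a /=; rewrite /bump leq0n add1n; apply: upt_step.
    by rewrite !cidx_rank ?(ltnW (ltn_ord a)) ?(ltn_ord a) //; lia.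
  by apply: sv_eq.
- by move=> a /=; rewrite /bump leq0n add1n => h; apply: sv0.
Qed.

Lemma cyc_wheel : lam i - lam j = (r.-1)%:Z -> (j < i)%N ->
  exists w : (k.+1).-tuple 'I_n, is_wheel_at r (upt lam) w.
Proof.
move=> hd hji.
have hsum : (\sum_(m < k) sv m = r.-1)%N.
  by have := sv_sum; rewrite hd => -[].
have [p hp] : exists p : 'I_k, (0 < sv p)%N.
  case: (boolP [exists p : 'I_k, (0 < sv p)%N]) => [/existsP // | /existsPn hn].
  exfalso; move: hsum; rewrite big1; first lia.
  by move=> m _; have := hn m; rewrite lt0n negbK => /eqP.
pose posv (a : nat) := if (a + p + 1 < k.+1)%N then (a + p + 1)%N else (a + p - k)%N.
have posv_lt : forall a : 'I_k.+1, (posv a < k.+1)%N.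
  move=> a; rewrite /posv; case: ifP => //; have := ltn_ord a; have := ltn_ord p; lia.
pose pos (a : 'I_k.+1) : 'I_k.+1 := Ordinal (posv_lt a).
have posi : injective pos.
  move=> a b /(congr1 val) /=; rewrite /posv.
  have := ltn_ord a; have := ltn_ord b; have := ltn_ord p.
  by case: ifP; case: ifP => ? ? ? ? ? ?; apply/val_inj => /=; lia.
have posS : forall a : 'I_k, posv (lift ord0 a) =
    if posv (widen_ord (leqnSn k) a) == k then 0%N else (posv (widen_ord (leqnSn k) a)).+1.
  move=> a /=; rewrite /bump leq0n add1n /posv.
  have := ltn_ord a; have := ltn_ord p.
  by case: ifP; case: ifP; case: ifP => * ; lia.
have posmax : posv (@ord_max k) = p.
  by rewrite /posv /=; case: ifP => ?; lia.
pose ss (a : 'I_k) := if posv (widen_ord (leqnSn k) a) == k then 0%N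
                      else sv (posv (widen_ord (leqnSn k) a)).
exists [tuple cidx (posv a) | a < k.+1].
apply: (mk_wheel (ss := ss)).
- move=> a b /cidx_inj h; apply: posi; apply/val_inj => /=; apply: h;
    rewrite -ltnS; exact: posv_lt.
- pose G (m : 'I_k.+1) := if (m == k :> nat) then 0%N else sv m.
  have e1 : (\sum_(m < k.+1) G m = r.-1)%N.
    rewrite big_ord_recr /= /G eqxx addn0 -hsum; apply: eq_bigr => m _ /=.
    by rewrite ifN_eq // neq_ltn ltn_ord.
  have e2 : (\sum_(m < k.+1) G m = \sum_(a < k.+1) G (pos a))%N.
    by apply: reindex_inj.
  rewrite e2 big_ord_recr /= in e1.
  have e3 : G (pos ord_max) = sv p.
    rewrite /G /= posmax ifN_eq //; have := ltn_ord p; lia.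
  rewrite e3 in e1.
  have e4 : (\sum_(a < k) G (pos (widen_ord (leqnSn k) a)) = \sum_(a < k) ss a)%N.
    by apply: eq_bigr.
  rewrite e4 in e1; lia.
- move=> a /=; rewrite posS /ss; case: eqP => hk.
    rewrite hk cidx0 cidxk expr0 mulr1; apply: upt_wrap => //; lia.
  have hm : (posv (widen_ord (leqnSn k) a) < k)%N.
    by have := posv_lt (widen_ord (leqnSn k) a); lia.
  have ew : posv (widen_ord (leqnSn k) a) = posv a by [].
  rewrite ew in hk hm *.
  apply: upt_step; first by rewrite !cidx_rank //; lia.
  exact: sv_eq.
- move=> a /=; rewrite posS /ss; case: eqP => hk.
    by rewrite hk cidx0 cidxk.
  have hm : (posv (widen_ord (leqnSn k) a) < k)%N.
    by have := posv_lt (widen_ord (leqnSn k) a); lia.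
  have ew : posv (widen_ord (leqnSn k) a) = posv a by [].
  rewrite ew in hk hm *.
  by move=> h; apply: sv0.
Qed.

End Chain.
Lemma eq_leval (f : laurent F n) g1 g2 : (forall i, g1 i = g2 i) -> leval f g1 = leval f g2.
Proof.
move=> h; rewrite /leval; apply: eq_bigr => m _; congr (_ * _).
by apply: eq_bigr => i _; rewrite h.
Qed.

Section Dens.
Variable hk1 : (1 <= k)%N.
Variable f : laurent F n.
Variable hJ3 : ideal_J3 k r f.
Variable z : 'I_n -> KK F.
Variable hz : forall i, z i != 0.
Variable w : (k.+1).-tuple 'I_n.
Variable ss : 'I_k -> nat.
Variable huniq : uniq w.
Variable hsum : (\sum_(a < k) ss a <= r - 2)%N.
Variable hrel : forall a : 'I_k,
  z (tnth w (lift ord0 a)) = z (tnth w (widen_ord (leqnSn k) a)) * t * q ^+ ss a.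
Variable hord : forall a : 'I_k, ss a = 0%N ->
  (tnth w (widen_ord (leqnSn k) a) < tnth w (lift ord0 a))%N.

Definition Wn m := tnth w (inord m).
Definition Sn m := ss (insubd (Ordinal hk1) m).
Definition i0 := Wn 0.

Lemma Sn_val (a : 'I_k) : Sn a = ss a.
Proof. by rewrite /Sn; congr ss; apply/val_inj; rewrite val_insubd ltn_ord. Qed.

Lemma Wn_lift (a : 'I_k) : tnth w (lift ord0 a) = Wn a.+1.
Proof.
rewrite /Wn; congr tnth; apply/val_inj => /=.
by rewrite inordK /bump ?leq0n ?add1n // ltnS ltn_ord.
Qed.

Lemma Wn_widen (a : 'I_k) : tnth w (widen_ord (leqnSn k) a) = Wn a.
Proof.
rewrite /Wn; congr tnth; apply/val_inj => /=.
by rewrite inordK // ltnS ltnW.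
Qed.

Lemma Wn_rel m : (m < k)%N -> z (Wn m.+1) = z (Wn m) * t * q ^+ Sn m.
Proof.
move=> hm; have := hrel (Ordinal hm).
by rewrite Wn_lift Wn_widen -Sn_val.
Qed.

Lemma Wn_ord m : (m < k)%N -> Sn m = 0%N -> (Wn m < Wn m.+1)%N.
Proof.
move=> hm; have := @hord (Ordinal hm).
by rewrite Wn_lift Wn_widen -Sn_val.
Qed.

Lemma Sn_sum : (\sum_(m < k) Sn m <= r - 2)%N.
Proof. by under eq_bigr => a _ do rewrite Sn_val. Qed.

Lemma Wn_inj m1 m2 : (m1 <= k)%N -> (m2 <= k)%N -> Wn m1 = Wn m2 -> m1 = m2.
Proof.
move=> h1 h2; rewrite /Wn => /(tuple_uniqP _ huniq) /(congr1 (@nat_of_ord _)).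
by rewrite !inordK // ltnS.
Qed.

Lemma mem_w x : x \in w -> exists2 m, (m <= k)%N & x = Wn m.
Proof.
move/tnthP => [a ->]; exists a; first by rewrite -ltnS.
by rewrite /Wn inord_val.
Qed.

Lemma Wn_in m : Wn m \in w.
Proof. exact: mem_tnth. Qed.

Definition rep x := if x \in w then i0 else x.

Lemma rep_rep x : rep (rep x) = rep x.
Proof. by rewrite /rep; case: (boolP (x \in w)) => h; rewrite ?Wn_in ?(negbTE h). Qed.

Lemma rep_W m : rep (Wn m) = i0.
Proof. by rewrite /rep Wn_in. Qed.

Definition cz x := z x / z (rep x).
Definition Zc (y : 'I_n -> KK F) := fun x => cz x * y (rep x).

Lemma Zc_z x : Zc z x = z x.
Proof. by rewrite /Zc /cz mulfVK. Qed.

Definition prodP m := \prod_(l < m) (t * q ^+ Sn l).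

Lemma chain_prod (g : nat -> KK F) :
  (forall m, (m < k)%N -> g m.+1 = g m * t * q ^+ Sn m) ->
  forall m, (m <= k)%N -> g m = g 0%N * prodP m.
Proof.
move=> hg; elim=> [|m IH] hm; first by rewrite /prodP big_ord0 mulr1.
by rewrite hg // IH 1?ltnW // /prodP big_ord_recr /= !mulrA.
Qed.

Definition good (lam : wt n) :=
  (forall m, (m < k)%N -> lam (Wn m.+1) = lam (Wn m) - (Sn m)%:Z) /\
  (forall c, c \notin w -> lam i0 < lam c \/ lam c < lam (Wn k)).

Section Good.
Variable lam : wt n.
Variable hg : good lam.

Lemma lam_mono a b : (a <= b)%N -> (b <= k)%N -> lam (Wn b) <= lam (Wn a).
Proof.
move=> hab; elim: b hab => [|b IH] hab hb.
  by rewrite leqn0 in hab; rewrite (eqP hab).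
case: (ltngtP a b.+1) => h.
- rewrite hg.1 //; have := IH h (ltnW hb); lia.
- lia.
- by rewrite h.
Qed.

Lemma bef_step m : (m < k)%N -> bef lam (Wn m) (Wn m.+1).
Proof.
move=> hm; rewrite /bef hg.1 //.
case: (posnP (Sn m)) => h.
  by rewrite h subr0 ltxx eqxx /= Wn_ord.
by apply/orP; left; lia.
Qed.

Lemma bef_chain a b : (a < b)%N -> (b <= k)%N -> bef lam (Wn a) (Wn b).
Proof.
move=> hab; elim: b hab => [|b IH] // hab hb.
case: (ltngtP a b) => h.
- by apply: (bef_trans (IH h (ltnW hb))); apply: bef_step.
- lia.
- by rewrite h; apply: bef_step.
Qed.

Lemma rank_chain m : (m < k)%N -> rank0 lam (Wn m.+1) = (rank0 lam (Wn m)).+1.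
Proof.
move=> hm; apply: rank_succ; first exact: bef_step.
move=> c.
case: (boolP (c \in w)) => [/mem_w [b hb ->] | hc] h1 h2.
  case: (ltngtP b m) => hbm.
  - by have := bef_asym (bef_chain hbm (ltnW hm)); rewrite h1.
  - case: (ltngtP b m.+1) => hbm'.
    + lia.
    + by have := bef_asym (bef_chain hbm' hb); rewrite h2.
    + by subst; rewrite (negbTE (bef_irr _ _)) in h2.
  - by subst; rewrite (negbTE (bef_irr _ _)) in h1.
case: (hg.2 c hc) => hl.
  have : bef lam c (Wn m).
    by rewrite /bef; apply/orP; left; have := lam_mono (leq0n m) (ltnW hm); rewrite /i0 in hl; lia.
  by move/bef_asym; rewrite h1.
have : bef lam (Wn m.+1) c.
  by rewrite /bef; apply/orP; left; have := lam_mono hm (leqnn k); lia.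
by move/bef_asym; rewrite h2.
Qed.

Lemma rank_W m : (m <= k)%N -> rank0 lam (Wn m) = (rank0 lam i0 + m)%N.
Proof.
elim: m => [|m IH] hm; first by rewrite addn0.
by rewrite rank_chain // IH 1?ltnW // addnS.
Qed.

Lemma lam_W m : (m <= k)%N -> lam (Wn m) = lam i0 - ((\sum_(l < m) Sn l)%N)%:Z.
Proof.
elim: m => [|m IH] hm; first by rewrite big_ord0 subr0.
by rewrite hg.1 // IH 1?ltnW // big_ord_recr /= PoszD opprD addrA.
Qed.

Lemma upt_chain m : (m < k)%N -> upt lam (Wn m.+1) = upt lam (Wn m) * t * q ^+ Sn m.
Proof. by move=> hm; apply: upt_step; [exact: rank_chain | exact: hg.1]. Qed.

Lemma Zc_upt x : Zc (upt lam) x = upt lam x.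
Proof.
rewrite /Zc /cz.
case: (boolP (x \in w)) => hx.
  have [m hm ->] := mem_w hx; rewrite rep_W /i0.
  rewrite (chain_prod Wn_rel hm) (chain_prod upt_chain hm).
  by rewrite [z (Wn 0) * _]mulrC mulfK ?hz // mulrC.
by rewrite /rep (negbTE hx) divff ?hz // mul1r.
Qed.

Lemma good_S' : inS' k r lam.
Proof.
exists i0, (Wn k); have hs := Sn_sum; have hl := lam_W (leqnn k).
have hR := rank_W (leqnn k).
rewrite /nbhd /rho2 hR hl; split.
  apply/andP; split; first by apply/eqP; lia.
  by apply/orP; left; lia.
lia.
Qed.

Lemma good0 : leval f (Zc (upt lam)) = 0.
Proof. by rewrite (eq_leval f Zc_upt); apply: hJ3; exact: good_S'. Qed.

End Good.

Definition mrg (R : {set 'I_n}) (y x : 'I_n -> KK F) := fun h => if h \in R then y h else x h.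
Definition sep (R : {set 'I_n}) (lam : wt n) :=
  forall a b, rep a \in R -> rep b \notin R -> lam b < lam a.
Definition PR R := forall y : 'I_n -> KK F, (forall i, y i != 0) ->
  forall lam, good lam -> sep R lam -> leval f (Zc (mrg R y (upt lam))) = 0.

Lemma P0 : PR set0.
Proof.
move=> y hy lam hg _; rewrite -(good0 hg); apply: eq_leval => i.
by rewrite /Zc /mrg in_set0.
Qed.

Lemma bef_diff (l1 l2 : wt n) x y : l1 x - l1 y = l2 x - l2 y -> bef l1 x y = bef l2 x y.
Proof.
move=> h; rewrite /bef.
have -> : (l1 y < l1 x) = (l2 y < l2 x) by apply/idP/idP => ?; lia.
by have -> : (l1 x == l1 y) = (l2 x == l2 y) by apply/eqP/eqP => ?; lia.
Qed.

Section Step.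
Variable R : {set 'I_n}.
Variable j : 'I_n.
Variable hj : rep j = j.
Variable hjR : j \notin R.
Variable hP : PR R.
Variable y : 'I_n -> KK F.
Variable hy : forall i, y i != 0.
Variable lam : wt n.
Variable hg : good lam.
Variable hsep : sep (j |: R) lam.

Definition BB : int := 1 + 2 * \sum_i `|lam i|.

Lemma hB a b : lam b - lam a < BB.
Proof.
have ha : `|lam a| <= \sum_i `|lam i|.
  by rewrite (bigD1 a) //= lerDl sumr_ge0.
have hb : `|lam b| <= \sum_i `|lam i|.
  by rewrite (bigD1 b) //= lerDl sumr_ge0.
rewrite /BB; lia.
Qed.

Definition AA (N : nat) : int := ((r.-1 * N)%N)%:Z.
Definition grp x : nat := if rep x \in R then 2%N else if rep x == j then 1%N else 0%N.
Definition sh N x : int := if rep x \in R then AA N + BB else if rep x == j then AA N else 0.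
Definition lamN N : wt n := fun x => lam x + sh N x.

Lemma sepg N a b : (grp b < grp a)%N -> lamN N b < lamN N a.
Proof.
have hA : 0 <= AA N by [].
have := hB a b.
rewrite /grp /lamN /sh.
case Ha: (rep a \in R); case Hb: (rep b \in R); case Ja: (rep a == j); case Jb: (rep b == j) => //= hb _; try lia.
- have := @hsep a b; rewrite !in_setU1 Ja Ha Jb Hb /= => h; have := h isT isT; lia.
Qed.

Lemma sh_grp N a b : grp a = grp b -> sh N a = sh N b.
Proof.
rewrite /grp /sh.
by case Ha: (rep a \in R); case Hb: (rep b \in R); case Ja: (rep a == j); case Jb: (rep b == j).
Qed.

Lemma grpW m : grp (Wn m) = grp i0.
Proof. by rewrite /grp rep_W /i0 rep_W. Qed.

Lemma shW N m : sh N (Wn m) = sh N i0.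
Proof. by apply: sh_grp; apply: grpW. Qed.

Lemma goodN N : good (lamN N).
Proof.
split.
  by move=> m hm; rewrite /lamN !shW hg.1 //; lia.
move=> c hc; case: (ltngtP (grp c) (grp i0)) => h.
- by right; apply: sepg; rewrite grpW.
- by left; apply: sepg.
- have e1 := sh_grp N h; have e2 := shW N k.
  by rewrite /lamN e1 e2; case: (hg.2 c hc) => h'; [left|right]; lia.
Qed.

Lemma sepN N : sep R (lamN N).
Proof.
move=> a b ha hb; apply: sepg.
by rewrite /grp ha (negbTE hb); case: (_ == _).
Qed.

Lemma upt_other N h : grp h = 0%N -> upt (lamN N) h = upt lam h.
Proof.
move=> h0.
have el : forall x, grp x = 0%N -> lamN N x = lam x.
  by move=> x; rewrite /grp /lamN /sh; case: (rep x \in R); case: (rep x == j) => //= _; rewrite addr0.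
have er : rank0 (lamN N) h = rank0 lam h.
  apply: rank_eq => x; case: (posnP (grp x)) => gx.
    by rewrite /bef !el.
  have h1 : bef (lamN N) x h by rewrite /bef; apply/orP; left; apply: sepg; rewrite h0.
  have h2 : bef lam x h.
    rewrite /bef; apply/orP; left; apply: hsep.
      by move: gx; rewrite /grp in_setU1; case: (rep x \in R); case: (rep x == j).
    by move: h0; rewrite /grp in_setU1; case: (rep h \in R); case: (rep h == j).
  by rewrite h1 h2.
by rewrite /Defs.upt /rho2 er el.
Qed.

Lemma grpj : grp j = 1%N.
Proof. by rewrite /grp hj (negbTE hjR) eqxx. Qed.

Definition vs N := upt (lamN N) j.

Lemma vs_form N : vs N = vs 0 * st ^+ (2 * k.+1 * N).
Proof.
have er : rank0 (lamN N) j = rank0 (lamN 0) j.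
  apply: rank_eq => x; case: (ltngtP (grp x) 1) => gx.
  - have h1 := sepg N (a := j) (b := x); have h2 := sepg 0 (a := j) (b := x).
    rewrite grpj in h1 h2; have := h1 gx; have := h2 gx.
    rewrite /bef => ? ?; apply/idP/idP => /orP [?|/andP [/eqP ? _]]; lia.
  - have h1 := sepg N (a := x) (b := j); have h2 := sepg 0 (a := x) (b := j).
    rewrite grpj in h1 h2.
    by rewrite /bef (h1 gx) (h2 gx).
  - apply: bef_diff; rewrite /lamN (sh_grp N (a := x) (b := j)) ?grpj //.
    by rewrite (sh_grp 0 (a := x) (b := j)) ?grpj //; lia.
have eN : forall M, lamN M j = lam j + AA M.
  by move=> M; rewrite /lamN /sh hj (negbTE hjR) eqxx.
rewrite /vs /Defs.upt /rho2 er !eN.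
have e : - (lam j + AA N) = - (lam j + AA 0) + - ((r.-1 * N)%N)%:Z.
  by rewrite /AA muln0; lia.
rewrite e (exprzDr (unit_nz (q_nz F k hr))) -exprnN -mulrA.
congr (_ * _).
congr (_ * _); by rewrite exprM -exprVn q_inv -exprM.
Qed.

Lemma vs_inj : injective vs.
Proof.
move=> N1 N2; rewrite !(vs_form N1) (vs_form N2) => /mulfI h.
apply: (@st_pow_inj F k r hr (2 * k.+1)%N) => //.
by apply: h; apply: upt_nz.
Qed.

Lemma step_PR : leval f (Zc (mrg (j |: R) y (upt lam))) = 0.
Proof.
pose a i := cz i * (if rep i == j then 1 else mrg R y (upt lam) (rep i)).
pose b i := rep i == j.
have hN : forall N, leval f (fun i => a i * (if b i then vs N else 1)) = 0.
  move=> N; rewrite -(hP hy (goodN N) (sepN N)); apply: eq_leval => i.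
  rewrite /Zc /a /b /mrg; case Hi: (rep i \in R).
    have -> : (rep i == j) = false by apply/eqP => e; move: hjR; rewrite -e Hi.
    by rewrite mulr1.
  case: eqP => e; first by rewrite mulr1 e.
  rewrite mulr1 upt_other //; by rewrite /grp rep_rep Hi; case: eqP.
have := uni vs_inj (fun N => upt_nz _ _) hN (hy j).
move=> <-; apply: eq_leval => i.
rewrite /Zc /a /b /mrg in_setU1; case: eqP => e.
  by rewrite mulr1 e.
by case: (rep i \in R); rewrite mulr1.
Qed.

End Step.

Lemma Pstep (R : {set 'I_n}) j : rep j = j -> j \notin R -> PR R -> PR (j |: R).
Proof. by move=> hj hjR hP y hy lam hg hsep; apply: step_PR. Qed.

Lemma PR_list s : uniq s -> (forall x, x \in s -> rep x = x) -> PR [set:: s].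
Proof.
elim: s => [|j s IH] /=; first by rewrite set_nil => _ _; exact: P0.
move=> /andP [hjs hu] hrep; rewrite set_cons; apply: Pstep.
- by apply: hrep; rewrite inE eqxx.
- by rewrite inE.
- by apply: IH => // x hx; apply: hrep; rewrite inE hx orbT.
Qed.

Definition lam0 : wt n := fun x => if x \in w then - ((\sum_(l < index x w) Sn l)%N)%:Z else r%:Z.

Lemma index_W m : (m <= k)%N -> index (Wn m) w = m.
Proof.
move=> hm; rewrite /Wn (tnth_nth (Wn 0)) index_uniq //.
  by rewrite inordK // ltnS.
by rewrite size_tuple inordK // ltnS.
Qed.

Lemma good_lam0 : good lam0.
Proof.
split.
  move=> m hm; rewrite /lam0 !Wn_in !index_W // 1?ltnW //.
  by rewrite big_ord_recr /= PoszD opprD.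
move=> c hc; left; rewrite /lam0 (negbTE hc) /i0 Wn_in index_W // big_ord0.
lia.
Qed.

Lemma dens_main : leval f z = 0.
Proof.
pose H := [set x | rep x == x].
have hH : PR H.
  have := PR_list (enum_uniq (mem H)) _.
  rewrite set_enum; apply => x; rewrite mem_enum inE => /eqP //.
have hs : sep H lam0.
  by move=> a b _; rewrite inE rep_rep eqxx.
have := hH z hz lam0 good_lam0 hs.
move=> <-; apply: eq_leval => i.
by rewrite -{1}Zc_z /Zc /mrg inE rep_rep eqxx.
Qed.

End Dens.

Section Fin.
Variable hk1 : (1 <= k)%N.
Variable f : laurent F n.

Lemma nbhd_inv (lam : wt n) (i j : 'I_n) : nbhd k.+1 r.-1 lam i j ->
  rank0 lam j = (rank0 lam i + k)%N /\
  (lam i - lam j <= (r.-1)%:Z - 1 \/ (lam i - lam j = (r.-1)%:Z /\ (j < i)%N)).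
Proof.
rewrite /nbhd /rho2 => /andP [/eqP h1 /orP [h2 | /andP [/eqP h2 h3]]]; split.
- lia.
- by left.
- lia.
- by right.
Qed.

Lemma S_wheel (lam : wt n) : inS k r lam -> exists w : (k.+1).-tuple 'I_n, is_wheel_at r (upt lam) w.
Proof.
case=> i [j] /nbhd_inv [hR [h | [h hji]]].
  exact: (chain_wheel hk1 hR h).
exact: (cyc_wheel hk1 hR h hji).
Qed.

Lemma sharp_wheel (lam : wt n) : (1 <= @sharp F n k r lam)%N <-> exists w : (k.+1).-tuple 'I_n, is_wheel_at r (upt lam) w.
Proof.
rewrite /sharp card_gt0; split.
  case/set0Pn => X /imsetP [w0 hw _]; exists w0; by rewrite inE in hw.
case=> w0 hw; apply/set0Pn; exists [set rot_tuple j w0 | j : 'I_k.+1].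
by apply: imset_f; rewrite inE.
Qed.

Lemma I_J1 : ideal_I k r f -> ideal_J1 k r f.
Proof.
move=> hI lam /sharp_wheel [w0 hw]; apply: hI; split; first exact: upt_nz.
by exists w0.
Qed.

Lemma I_J2 : ideal_I k r f -> ideal_J2 k r f.
Proof.
move=> hI lam /S_wheel [w0 hw]; apply: hI; split; first exact: upt_nz.
by exists w0.
Qed.

Lemma S'_S (lam : wt n) : inS' k r lam -> inS k r lam.
Proof. by case=> i [j [h _]]; exists i, j. Qed.

Lemma J1_J3 : ideal_J1 k r f -> ideal_J3 k r f.
Proof. by move=> h lam /S'_S /S_wheel /sharp_wheel; apply: h. Qed.

Lemma J2_J3 : ideal_J2 k r f -> ideal_J3 k r f.
Proof. by move=> h lam /S'_S; apply: h. Qed.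

Lemma J3_I : ideal_J3 k r f -> ideal_I k r f.
Proof.
move=> hJ3 z [hz [w0 hw]]; have [ss0 [hu hs hrel hord]] := wheel_inv hw.
exact: (dens_main hk1 hJ3 hz hu hs hrel hord).
Qed.

Lemma all_equiv :
  (ideal_I k r f <-> ideal_J1 k r f) /\
  (ideal_I k r f <-> ideal_J2 k r f) /\
  (ideal_I k r f <-> ideal_J3 k r f).
Proof.
split; [|split]; split.
- exact: I_J1.
- by move/J1_J3/J3_I.
- exact: I_J2.
- by move/J2_J3/J3_I.
- by move/I_J1/J1_J3.
- exact: J3_I.
Qed.
End Fin.

End Upt.


Theorem lemma3p1 (F : numClosedFieldType) (n k r : nat)
  (hn : (2 <= n)%N) (hk1 : (1 <= k)%N) (hk2 : (k <= n - 1)%N) (hr : (2 <= r)%N)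
  (f : laurent F n) :
  (ideal_I k r f <-> ideal_J1 k r f) /\
  (ideal_I k r f <-> ideal_J2 k r f) /\
  (ideal_I k r f <-> ideal_J3 k r f).
Proof. exact: (all_equiv hr hk1 f). Qed.
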